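(* For any $x\in(H^\ast)^{\otimes n}$ and $v\in H^{\otimes n}$, $[\mathcal{B}_n(x)](v)=x(\mathcal{B}_n(v))$.
   Context: $G$ finite group, $H$ a finite dimensional $G$-graded $G$-module, $H^\ast$ its dual with $(\gamma\cdot x)(v)=x(\gamma^{-1}\cdot v)$ and $(H^\ast)_m=(H_{m^{-1}})^\ast$; $B_n$ acts on $H^{\otimes n}$ and $(H^\ast)^{\otimes n}$ via the braiding $v\otimes w\mapsto(g\cdot w)\otimes v$ for $v$ of degree $g$. The pairing is $(x_1\otimes\cdots\otimes x_n)(v_1\otimes\cdots\otimes v_n)=x_n(v_1)\cdots x_1(v_n)$. $\mathcal{B}_n$ is the $n$th braidization (on $H^{\otimes n}$ and on $(H^\ast)^{\otimes n}$): for $\boldsymbol\gamma\in G^n$ and $v$ in $H_{\gamma_1}\otimes\cdots\otimes H_{\gamma_n}$, $\mathcal{B}_n(v)=\frac{1}{|A_{\boldsymbol\gamma}|}\sum_{b_{\boldsymbol\gamma}\in A_{\boldsymbol\gamma}}b_{\boldsymbol\gamma}\cdot v$, where $A_{\boldsymbol\gamma}$ is the set of distinct transformations $b_{\boldsymbol\gamma}\in G^n\rtimes S_n$ induced by braids $b\in B_n$ acting on $\boldsymbol\gamma$ (under $b_i(\gamma_1,\dots,\gamma_n)=(\dots,\gamma_i\gamma_{i+1}\gamma_i^{-1},\gamma_i,\dots)$), i.e. morphisms with source $\boldsymbol\gamma$ in the groupoid $\mathcal G^n$. *)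

(* Defs.v *)
From HB Require Import structures.
From mathcomp Require Import all_boot all_order all_algebra all_fingroup.
From mathcomp Require Import boolp.
Set Implicit Arguments. Unset Strict Implicit. Unset Printing Implicit Defensive.
Import GRing.Theory.
Local Open Scope ring_scope.

(* H has a homogeneous basis e_0,...,e_{d-1}; basis vector
   e_k has degree [deg k] in G, and gamma acts by the matrix [rho gamma]
   (column convention: gamma . e_k = \sum_l rho gamma l k e_l).
   A tensor in H^{(x)n} is given by its coordinates on the basis
   e_{f 0} (x) ... (x) e_{f (n-1)}, f : {ffun 'I_n -> 'I_d}. *)

Section Braidization.
Variables (gT : finGroupType) (n : nat).

(* a degree sequence (object of the groupoid G^n) *)
Definition degseq := {ffun 'I_n -> gT}.

(* An element (p, c) of G^n x| S_n: it sends v_0 (x) ... (x) v_{n-1}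
   to the tensor whose j-th factor is  c_j . v_{p j}. *)
Definition gpd := ({perm 'I_n} * {ffun 'I_n -> gT})%type.

Definition gpd_id : gpd := (1%g, [ffun => 1%g]).

Definition gpd_tgt (g : degseq) (t : gpd) : degseq :=
  [ffun j => (t.2 j * g (t.1 j) * (t.2 j)^-1)%g].

(* post-compose with the braid generator b_i (l = (i, true)) or its inverse
   (l = (i, false)), where b_i : v (x) w |-> (deg v . w) (x) v on factors i,i+1.
   Letters with i+1 >= n act trivially. *)
Definition gpd_step (g : degseq) (t : gpd) (l : 'I_n * bool) : gpd :=
  let i := l.1 in
  if (i.+1 < n)%N then
    let i1 : 'I_n := insubd i i.+1 in
    let de := gpd_tgt g t in
    let c := t.2 in
    ((tperm i i1 * t.1)%g,
     if l.2 then
       [ffun j => if j == i then (de i * c i1)%g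
                  else if j == i1 then c i else c j]
     else
       [ffun j => if j == i then c i1
                  else if j == i1 then ((de i1)^-1 * c i)%g else c j])
  else t.

Definition induced (g : degseq) (w : seq ('I_n * bool)) : gpd :=
  foldl (gpd_step g) gpd_id w.

Definition Aset (g : degseq) : {set gpd} :=
  [set t | `[< exists w, induced g w = t >] ].

Variable F : fieldType.

Definition idx (d : nat) := {ffun 'I_n -> 'I_d}.

Definition degs d (deg : 'I_d -> gT) (f : idx d) : degseq :=
  [ffun j => deg (f j)].

Definition gpd_act d (rho : gT -> 'M[F]_d) (t : gpd) (V : idx d -> F)
  : idx d -> F :=
  fun h => \sum_(f : idx d) V f * \prod_(j : 'I_n) rho (t.2 j) (h j) (f (t.1 j)).

Definition hproj d (deg : 'I_d -> gT) (g : degseq) (V : idx d -> F)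
  : idx d -> F :=
  fun f => if degs deg f == g then V f else 0.

Definition braidize d (deg : 'I_d -> gT) (rho : gT -> 'M[F]_d)
  (V : idx d -> F) : idx d -> F :=
  fun h => \sum_(g : degseq)
     (#|Aset g|%:R)^-1 * \sum_(t in Aset g) gpd_act rho t (hproj deg g V) h.

(* dual module H-dual in the dual basis e^k: (H-dual)_m = dual of H_{m^-1}, so e^k has
   degree (deg k)^-1; (gamma . x)(v) = x(gamma^-1 . v) gives the matrix
   (rho gamma^-1)^T. *)
Definition dual_deg d (deg : 'I_d -> gT) : 'I_d -> gT := fun k => ((deg k)^-1)%g.
Definition dual_rho d (rho : gT -> 'M[F]_d) : gT -> 'M[F]_d :=
  fun g => (rho (g^-1)%g)^T.

(* (x_1 (x) ... (x) x_n)(v_1 (x) ... (x) v_n) = x_n(v_1) ... x_1(v_n) *)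
Definition pairing d (X V : idx d -> F) : F :=
  \sum_(f : idx d) X [ffun j => f (rev_ord j)] * V f.

End Braidization.

(* Main.v *)
Require Import Defs.
From HB Require Import structures.
From mathcomp Require Import all_boot all_order all_algebra all_fingroup.
From mathcomp Require Import boolp.
From mathcomp Require Import zify.
From Stdlib Require Import Lia.
Import GRing.Theory.

Set Implicit Arguments. Unset Strict Implicit. Unset Printing Implicit Defensive.

Section Gpd.
Variables (gT : finGroupType) (n : nat).
Local Notation gpd := (gpd gT n).
Local Notation degseq := (degseq gT n).
Local Open Scope group_scope.

Definition comp (s t : gpd) : gpd := (s.1 * t.1, [ffun j => s.2 j * t.2 (s.1 j)]).
Definition ginv (t : gpd) : gpd := (t.1^-1, [ffun j => (t.2 (t.1^-1 j))^-1]).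
Definition rperm : {perm 'I_n} := perm (@rev_ord_inj n).
Definition mir (t : gpd) : gpd := (rperm * t.1 * rperm, [ffun k => t.2 (rev_ord k)]).
Definition rv (g : degseq) : degseq := [ffun k => (g (rev_ord k))^-1].
Definition E (h : degseq) l : gpd := gpd_step h (gpd_id gT n) l.
Definition flipl (l : 'I_n * bool) := (l.1, ~~ l.2).
Definition mirl (l : 'I_n * bool) : 'I_n * bool :=
  (if (l.1.+1 < n)%N then insubd l.1 (n - l.1.+2) else l.1, ~~ l.2).

Lemma gpdP (s t : gpd) : s.1 = t.1 -> (forall j, s.2 j = t.2 j) -> s = t.
Proof. by case: s t => [p c] [q e] /= -> /ffunP ->. Qed.

Lemma compA a b c : comp (comp a b) c = comp a (comp b c).
Proof. by apply: gpdP => [|j]; rewrite /= ?mulgA // !ffunE permM mulgA. Qed.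

Lemma comp1t t : comp (gpd_id gT n) t = t.
Proof. by apply: gpdP => [|j]; rewrite /= ?mul1g // !ffunE perm1 mul1g. Qed.

Lemma compt1 t : comp t (gpd_id gT n) = t.
Proof. by apply: gpdP => [|j]; rewrite /= ?mulg1 // !ffunE mulg1. Qed.

Lemma compVt t : comp (ginv t) t = gpd_id gT n.
Proof. by apply: gpdP => [|j]; rewrite /= ?mulVg // !ffunE mulVg. Qed.

Lemma comptV t : comp t (ginv t) = gpd_id gT n.
Proof. by apply: gpdP => [|j]; rewrite /= ?mulgV // !ffunE permK mulgV. Qed.

Lemma ginv_uniq a b : comp a b = gpd_id gT n -> a = ginv b.
Proof.
by move=> h; rewrite -[a]compt1 -(comptV b) -compA h comp1t.
Qed.

Lemma ginvK t : ginv (ginv t) = t.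
Proof. by symmetry; apply: ginv_uniq; rewrite comptV. Qed.

Lemma ginv_comp s t : ginv (comp s t) = comp (ginv t) (ginv s).
Proof.
symmetry; apply: ginv_uniq.
by rewrite compA -[comp (ginv s) _]compA compVt comp1t compVt.
Qed.

Lemma comp_injl t : injective (comp^~ t).
Proof.
move=> a b /= h.
by rewrite -[a]compt1 -(comptV t) -compA h compA comptV compt1.
Qed.

Lemma rpermE k : rperm k = rev_ord k.
Proof. by rewrite permE. Qed.

Lemma rperm2 : rperm * rperm = 1.
Proof. by apply/permP => k; rewrite permM !rpermE rev_ordK perm1. Qed.

Lemma mirK t : mir (mir t) = t.
Proof.
apply: gpdP => [|j]; last by rewrite /= !ffunE rev_ordK.
by apply/permP => k; rewrite /= !permM !rpermE !rev_ordK.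
Qed.

Lemma mir_comp s t : mir (comp s t) = comp (mir s) (mir t).
Proof.
apply: gpdP => [|j] /=.
  by apply/permP => k; rewrite !permM !rpermE rev_ordK.
by rewrite !ffunE !permM !rpermE rev_ordK.
Qed.

Lemma mir_id : mir (gpd_id gT n) = gpd_id gT n.
Proof.
apply: gpdP => [|j] /=; first by apply/permP => k; rewrite !permM !rpermE perm1 rev_ordK perm1.
by rewrite !ffunE.
Qed.

Lemma mir_inv t : mir (ginv t) = ginv (mir t).
Proof. by apply: ginv_uniq; rewrite -mir_comp compVt mir_id. Qed.

Lemma mir_inj : injective mir.
Proof. exact: can_inj mirK. Qed.

Lemma rvK g : rv (rv g) = g.
Proof. by apply/ffunP => k; rewrite !ffunE rev_ordK invgK. Qed.

Lemma tgt_id g : gpd_tgt g (gpd_id gT n) = g.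
Proof. by apply/ffunP => j; rewrite !ffunE perm1 mul1g invg1 mulg1. Qed.

Lemma tgt_comp g s t : gpd_tgt g (comp s t) = gpd_tgt (gpd_tgt g t) s.
Proof. by apply/ffunP => j; rewrite !ffunE permM invMg !mulgA. Qed.

Lemma tgt_mir h u : gpd_tgt (rv h) (mir u) = rv (gpd_tgt h u).
Proof.
apply/ffunP => k; rewrite !ffunE !permM !rpermE rev_ordK !invMg invgK !mulgA.
done.
Qed.

Lemma step_comp g t l : gpd_step g t l = comp (E (gpd_tgt g t) l) t.
Proof.
rewrite /E /gpd_step; case: ifP => hi; last by rewrite comp1t.
apply: gpdP => [|j] /=; first by rewrite mulg1.
rewrite tgt_id; move: hi; case: l => i b /= hi.
set i1 := insubd i i.+1.
have hv : val i1 = i.+1 by rewrite /i1 val_insubd hi.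
have ne : i != i1 by rewrite -val_eqE hv ltn_eqF.
rewrite !ffunE permM perm1.
case: (eqVneq j i) => [->|nji]; first by case: b; rewrite !ffunE eqxx tpermL ?mulg1 ?mul1g.
case: (eqVneq j i1) => [->|nji1].
  by case: b; rewrite !ffunE eqxx eq_sym (negbTE ne) ?tpermR ?mul1g ?mulg1.
by rewrite tpermD 1?eq_sym //; case: b; rewrite !ffunE (negbTE nji) (negbTE nji1) mul1g.
Qed.



Lemma induced_rcons (g : degseq) w l : induced g (rcons w l) = gpd_step g (induced g w) l.
Proof. by rewrite /induced foldl_rcons. Qed.

Lemma induced_nil (g : degseq) : induced g [::] = gpd_id gT n.
Proof. by []. Qed.

Lemma induced_cat (g : degseq) w1 w2 :
  induced g (w1 ++ w2) = comp (induced (gpd_tgt g (induced g w1)) w2) (induced g w1).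
Proof.
elim/last_ind: w2 => [|w2 l IH]; first by rewrite cats0 induced_nil comp1t.
rewrite -rcons_cat !induced_rcons IH !step_comp compA; congr (comp (E _ _) _).
by rewrite tgt_comp.
Qed.

Lemma E_triv (h : degseq) (l : 'I_n * bool) : ~~ (l.1.+1 < n)%N -> E h l = gpd_id gT n.
Proof. by rewrite /E /gpd_step => /negbTE ->. Qed.

Lemma E_true (h : degseq) (i : 'I_n) (hi : (i.+1 < n)%N) :
  E h (i, true) = (tperm i (insubd i i.+1), [ffun j => if j == i then h i else 1]).
Proof.
rewrite /E /gpd_step /= hi tgt_id; apply: gpdP => [|j] /=; first by rewrite mulg1.
rewrite !ffunE; case: eqP => _; rewrite ?mulg1 //; by case: eqP.
Qed.

Lemma E_false (h : degseq) (i : 'I_n) (hi : (i.+1 < n)%N) :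
  E h (i, false) = (tperm i (insubd i i.+1),
     [ffun j => if j == insubd i i.+1 then (h (insubd i i.+1))^-1 else 1]).
Proof.
rewrite /E /gpd_step /= hi tgt_id; apply: gpdP => [|j] /=; first by rewrite mulg1.
have hv : val (insubd i i.+1) = i.+1 by rewrite val_insubd hi.
have ne : i != insubd i i.+1 by rewrite -val_eqE hv ltn_eqF.
rewrite !ffunE; case: (eqVneq j i) => [->|_]; first by rewrite (negbTE ne).
by case: eqP => _; rewrite ?mulg1.
Qed.

Lemma E_flip (h : degseq) l : comp (E (gpd_tgt h (E h l)) (flipl l)) (E h l) = gpd_id gT n.
Proof.
case: l => i b; rewrite /flipl /=.
case hi: (i.+1 < n)%N; last by rewrite !E_triv ?hi // comp1t.
set i1 := insubd i i.+1.
have hv : val i1 = i.+1 by rewrite /i1 val_insubd hi.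
have ne : i != i1 by rewrite -val_eqE hv ltn_eqF.
have nei : (i == i1) = false by apply/negbTE.
have nei' : (i1 == i) = false by rewrite eq_sym nei.
case: b => /=; rewrite ?E_true ?E_false //; apply: gpdP => [|j] /=;
  rewrite ?tperm2 // !ffunE -/i1.
- case: (eqVneq j i) => [->|nji]; first by rewrite nei tpermL nei' mul1g.
  case: (eqVneq j i1) => [->|nji1].
    by rewrite nei' /= tpermR eqxx mul1g invg1 mulg1 mulVg.
  by rewrite tpermD ?(negbTE nji) ?mul1g // eq_sym.
- case: (eqVneq j i) => [->|nji].
    by rewrite nei /= tpermL eqxx mul1g invg1 mulg1 mulgV.
  rewrite mul1g.
  case: (eqVneq j i1) => [->|nji1]; first by rewrite tpermR nei.
  by rewrite tpermD ?(negbTE nji1) // eq_sym.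
Qed.

Lemma rev_eq (k i : 'I_n) : (rev_ord k == i) = (k == rev_ord i).
Proof. by rewrite -{1}(rev_ordK i) (inj_eq rev_ord_inj). Qed.

Lemma mirE (h : degseq) l : mir (E h l) = E (rv h) (mirl l).
Proof.
case: l => i b; rewrite /mirl /=.
case hi: (i.+1 < n)%N; last by rewrite !E_triv ?hi ?mir_id.
set i1 := insubd i i.+1.
set mi := insubd i (n - i.+2).
have hv : val i1 = i.+1 by rewrite /i1 val_insubd hi.
have hmv : val mi = (n - i.+2)%N by rewrite /mi val_insubd; apply/ifT; lia.
have hmi : (mi.+1 < n)%N by rewrite hmv; lia.
set mi1 := insubd mi mi.+1.
have hmv1 : val mi1 = mi.+1 by rewrite /mi1 val_insubd hmi.
have r1 : rev_ord i = mi1 by apply: val_inj; rewrite /= hmv1 hmv; lia.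
have r2 : rev_ord i1 = mi by apply: val_inj; rewrite /= hv hmv; lia.
have hp : rperm * tperm i i1 * rperm = tperm mi mi1.
  apply/permP => k; rewrite !permM !rpermE.
  case: (tpermP i i1 (rev_ord k)) => [e|e|/eqP n1 /eqP n2].
  - by rewrite r2 -r1 -e rev_ordK tpermR.
  - by rewrite r1 -r2 -e rev_ordK tpermL.
  rewrite tpermD ?rev_ordK //.
  + by rewrite -r2 eq_sym -rev_eq.
  + by rewrite -r1 eq_sym -rev_eq.
case: b => /=; rewrite ?E_true ?E_false // -/mi1; apply: gpdP => [|k] /=.
- exact: hp.
- by rewrite !ffunE rev_eq r1 -r1 rev_ordK invgK.
- exact: hp.
- by rewrite !ffunE -/i1 rev_eq r2 -r2 rev_ordK.
Qed.

Lemma induced_mir (g : degseq) w : induced (rv g) (map mirl w) = mir (induced g w).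
Proof.
elim/last_ind: w => [|w l IH]; first by rewrite /= mir_id.
by rewrite map_rcons !induced_rcons !step_comp IH mir_comp mirE tgt_mir.
Qed.

Lemma induced_inv (g : degseq) w :
  exists w', induced (gpd_tgt g (induced g w)) w' = ginv (induced g w).
Proof.
elim/last_ind: w => [|w l [w' IH]]; first by exists [::]; rewrite /= tgt_id; apply: ginv_uniq; rewrite comp1t.
set t := induced g w; set e := E (gpd_tgt g t) l.
have hs : induced g (rcons w l) = comp e t by rewrite induced_rcons step_comp.
exists (flipl l :: w'); rewrite hs -cat1s induced_cat.
have h1 : induced (gpd_tgt g (comp e t)) [:: flipl l] = ginv e.
  by apply: ginv_uniq; rewrite /= -/(E _ _) tgt_comp -/e; exact: E_flip.
by rewrite h1 -tgt_comp -compA compVt comp1t IH ginv_comp.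
Qed.

Lemma AsetP (g : degseq) t : reflect (exists w, induced g w = t) (t \in Aset g).
Proof. by rewrite inE; exact: asboolP. Qed.

Lemma Aset_comp (g : degseq) t u :
  t \in Aset g -> u \in Aset (gpd_tgt g t) -> comp u t \in Aset g.
Proof.
move=> /AsetP [w <-] /AsetP [w' <-]; apply/AsetP; exists (w ++ w').
by rewrite induced_cat.
Qed.

Lemma Aset_inv (g : degseq) t : t \in Aset g -> ginv t \in Aset (gpd_tgt g t).
Proof.
move=> /AsetP [w <-]; have [w' h] := induced_inv g w; apply/AsetP; by exists w'.
Qed.

Lemma Aset_mir (g : degseq) t : t \in Aset g -> mir t \in Aset (rv g).
Proof. by move=> /AsetP [w <-]; apply/AsetP; exists (map mirl w); rewrite induced_mir. Qed.

Lemma card_tgt_le (g : degseq) t : t \in Aset g -> #|Aset (gpd_tgt g t)| <= #|Aset g|.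
Proof.
move=> tA.
rewrite -(card_imset _ (@comp_injl t)); apply: subset_leq_card.
apply/subsetP => x /imsetP [u uA ->]; exact: Aset_comp.
Qed.

Lemma card_tgt (g : degseq) t : t \in Aset g -> #|Aset (gpd_tgt g t)| = #|Aset g|.
Proof.
move=> tA; apply/eqP; rewrite eqn_leq card_tgt_le //=.
have := card_tgt_le (Aset_inv tA); by rewrite -tgt_comp compVt tgt_id.
Qed.

Lemma card_rv_le (g : degseq) : #|Aset g| <= #|Aset (rv g)|.
Proof.
rewrite -(card_imset _ mir_inj); apply: subset_leq_card.
apply/subsetP => x /imsetP [u uA ->]; exact: Aset_mir.
Qed.

Lemma card_rv (g : degseq) : #|Aset (rv g)| = #|Aset g|.
Proof.
apply/eqP; rewrite eqn_leq card_rv_le andbT.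
by have := card_rv_le (rv g); rewrite rvK.
Qed.

Definition adj (t : gpd) := mir (ginv t).
Definition phi (x : degseq * gpd) : degseq * gpd := (rv (gpd_tgt x.1 x.2), adj x.2).

Lemma tgt_adj (g : degseq) t : gpd_tgt (rv (gpd_tgt g t)) (adj t) = rv g.
Proof. by rewrite /adj tgt_mir -tgt_comp compVt tgt_id. Qed.

Lemma phiK : involutive phi.
Proof.
case=> g t; rewrite /phi /= tgt_adj rvK /adj mir_inv mirK ginvK //.
Qed.

Lemma Aset_phi x : x.2 \in Aset x.1 -> (phi x).2 \in Aset (phi x).1.
Proof. case: x => g t /= tA; exact/Aset_mir/Aset_inv. Qed.

Lemma card_phi x : x.2 \in Aset x.1 -> #|Aset (phi x).1| = #|Aset x.1|.
Proof. case: x => g t /= tA; by rewrite card_rv card_tgt. Qed.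

End Gpd.

Local Open Scope ring_scope.

Section Ana.
Variables (gT : finGroupType) (n : nat) (F : fieldType) (d : nat).
Local Notation gpd := (gpd gT n).
Local Notation degseq := (degseq gT n).
Local Notation idx := (idx n d).

Definition rf (f : idx) : idx := [ffun j => f (rev_ord j)].
Lemma rfK : involutive rf.
Proof. by move=> f; apply/ffunP => j; rewrite !ffunE rev_ordK. Qed.
Lemma rf_inj : injective rf. Proof. exact: inv_inj rfK. Qed.

Lemma pairing_act (rho : gT -> 'M[F]_d) (t : gpd) (Y V : idx -> F) :
  pairing (gpd_act (dual_rho rho) t Y) V = pairing Y (gpd_act rho (adj t) V).
Proof.
have rfE f : [ffun j => rf f (rev_ord j)] = f by rewrite -/(rf (rf f)) rfK.
rewrite /pairing [RHS](reindex_inj rf_inj) /=.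
under [RHS]eq_bigr => f _ do rewrite rfE /gpd_act big_distrr.
rewrite /gpd_act.
under [LHS]eq_bigr => f _ do rewrite mulr_suml.
rewrite exchange_big /=; apply: eq_bigr => f' _; apply: eq_bigr => f _.
rewrite -mulrA; congr (_ * _); rewrite mulrC; congr (_ * _).
rewrite (reindex_inj (h := fun k => (t.1^-1)%g (rev_ord k))); last first.
  by move=> a b /= /perm_inj /rev_ord_inj.
apply: eq_bigr => k _.
by rewrite /dual_rho mxE /adj /mir /ginv /= permKV !ffunE !permM !rpermE.
Qed.


Lemma pairing_hproj (deg : 'I_d -> gT) (g : degseq) (Y V : idx -> F) :
  pairing (hproj (dual_deg deg) g Y) V = pairing Y (hproj deg (rv g) V).
Proof.
apply: eq_bigr => f _; rewrite /hproj.
have -> : degs (dual_deg deg) [ffun j => f (rev_ord j)] = rv (degs deg f).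
  by apply/ffunP => j; rewrite !ffunE.
have -> : (rv (degs deg f) == g) = (degs deg f == rv g).
  by apply/eqP/eqP => [<-|->]; rewrite rvK.
by case: ifP; rewrite ?mul0r ?mulr0.
Qed.

Definition graded (deg : 'I_d -> gT) (rho : gT -> 'M[F]_d) :=
  forall (g : gT) (k l : 'I_d), rho g l k != 0 -> deg l = (g * deg k * g^-1)%g.

Lemma act_graded deg rho (hg : graded deg rho) (t : gpd) (g : degseq) (V : idx -> F) h :
  gpd_act rho t (hproj deg g V) h
  = hproj deg (gpd_tgt g t) (gpd_act rho t (hproj deg g V)) h.
Proof.
rewrite {2}/hproj; case: eqP => // hne.
rewrite /gpd_act; apply: big1 => f _; rewrite /hproj.
case: eqP => [hf|]; last by rewrite mul0r.
apply/eqP; rewrite mulf_eq0; apply/orP; right.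
apply/negPn/negP => /prodf_neq0 nz; apply: hne.
apply/ffunP => j; rewrite !ffunE; have := hg _ _ _ (nz j isT).
by rewrite -hf ffunE.
Qed.

Lemma dual_graded deg rho : graded deg rho -> graded (dual_deg deg) (dual_rho rho).
Proof.
move=> hg g k l; rewrite /dual_rho mxE => /hg hk.
by rewrite /dual_deg hk !invMg !invgK !mulgA mulgV mul1g mulgK.
Qed.

Lemma pairing_ext (A A' B B' : idx -> F) :
  (forall h, A h = A' h) -> (forall h, B h = B' h) -> pairing A B = pairing A' B'.
Proof. by move=> hA hB; apply: eq_bigr => f _; rewrite hA hB. Qed.

Lemma pairing_sumL (a : degseq -> F) (B : degseq -> gpd -> idx -> F) (V : idx -> F) :
  pairing (fun h => \sum_(g : degseq) a g * \sum_(t in Aset g) B g t h) V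
  = \sum_(g : degseq) a g * \sum_(t in Aset g) pairing (B g t) V.
Proof.
rewrite /pairing.
under eq_bigr => f _ do rewrite mulr_suml.
rewrite exchange_big; apply: eq_bigr => g _.
under eq_bigr => f _ do rewrite -mulrA mulr_suml.
rewrite -mulr_sumr; congr (_ * _); rewrite exchange_big //.
Qed.

Lemma pairing_sumR (a : degseq -> F) (B : degseq -> gpd -> idx -> F) (X : idx -> F) :
  pairing X (fun h => \sum_(g : degseq) a g * \sum_(t in Aset g) B g t h)
  = \sum_(g : degseq) a g * \sum_(t in Aset g) pairing X (B g t).
Proof.
rewrite /pairing.
under eq_bigr => f _ do rewrite mulr_sumr.
rewrite exchange_big; apply: eq_bigr => g _.
under eq_bigr => f _ do rewrite mulrCA mulr_sumr.
rewrite -mulr_sumr; congr (_ * _); rewrite exchange_big //.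
Qed.

End Ana.

Lemma sum_phi (gT : finGroupType) (n : nat) (F : fieldType) (Fn : degseq gT n * gpd gT n -> F) :
  \sum_(g : degseq gT n) \sum_(t in Aset g) (#|Aset g|%:R)^-1 * Fn (phi (g, t))
  = \sum_(g : degseq gT n) \sum_(t in Aset g) (#|Aset g|%:R)^-1 * Fn (g, t).
Proof.
rewrite (pair_big_dep xpredT (fun g t => t \in Aset g) (fun g t => (#|Aset g|%:R)^-1 * Fn (phi (g, t)))).
rewrite (pair_big_dep xpredT (fun g t => t \in Aset g) (fun g t => (#|Aset g|%:R)^-1 * Fn (g, t))).
rewrite [RHS](reindex_inj (inv_inj (@phiK gT n))).
apply: eq_big => x.
  apply/idP/idP => tA; first exact: (Aset_phi tA).
  by have := Aset_phi tA; rewrite phiK.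
move=> tA; have hc := card_phi tA.
rewrite -surjective_pairing; congr (_ * _); rewrite -hc; done.
Qed.

Unset Implicit Arguments. Set Strict Implicit.

Theorem corollary2p39
  (gT : finGroupType) (F : fieldType) (charF0 : [pchar F] =i pred0)
  (d : nat) (deg : 'I_d -> gT) (rho : gT -> 'M[F]_d)
  (rho1 : rho 1%g = 1%:M)
  (rhoM : forall g h : gT, rho (g * h)%g = rho g *m rho h)
  (rho_graded : forall (g : gT) (k l : 'I_d),
      rho g l k != 0 -> deg l = (g * deg k * g^-1)%g)
  (n : nat) (X V : idx n d -> F) :
  pairing (braidize (dual_deg deg) (dual_rho rho) X) V
  = pairing X (braidize deg rho V).
Proof.
have hg : graded deg rho by [].
have hdg := dual_graded hg.
rewrite /braidize pairing_sumL pairing_sumR.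
pose Fn (x : degseq gT n * gpd gT n) := pairing X (gpd_act rho x.2 (hproj deg x.1 V)).
pose a (g : degseq gT n) : F := (#|Aset g|%:R)^-1.
have step g t : pairing (gpd_act (dual_rho rho) t (hproj (dual_deg deg) g X)) V
                = Fn (phi (g, t)).
  rewrite (pairing_ext (A' := hproj (dual_deg deg) (gpd_tgt g t)
             (gpd_act (dual_rho rho) t (hproj (dual_deg deg) g X))) (B' := V)) //;
    last by move=> h; rewrite -act_graded.
  rewrite pairing_hproj pairing_act pairing_hproj /Fn /phi /=.
  apply: pairing_ext => // h; rewrite -(tgt_adj g t); symmetry; exact: act_graded.
under eq_bigr => g _ do under eq_bigr => t _ do rewrite step.
rewrite -/a.
transitivity (\sum_(g : degseq gT n) \sum_(t in Aset g) a g * Fn (phi (g, t))).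
  by apply: eq_bigr => g _; rewrite mulr_sumr.
transitivity (\sum_(g : degseq gT n) \sum_(t in Aset g) a g * Fn (g, t)); last first.
  by apply: eq_bigr => g _; rewrite mulr_sumr.
exact: sum_phi.
Qed.
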